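(* Let $p\in(0,1)$, $\varepsilon>0$, and let $\mathcal{C}\subseteq\mathbb{F}_2^{m\times n}$ be a fixed $\mathbb{F}_2$-linear rank metric code with $T_{\mathcal{C}}<1$ (so $S_{\mathcal{C}}<2$). Then $$\Pr_{Y\sim\mathbb{F}_2^{m\times n}}\left[S_{\mathcal{C}+\{0,Y\}}>1+2T_{\mathcal{C}}+T_{\mathcal{C}}^{1.5}\right]<T_{\mathcal{C}}^{0.5},$$ where $Y$ is uniform.
   Context: $\mathcal{B}_R(X,pn)=\{Z\in\mathbb{F}_2^{m\times n}:\mathrm{rank}(X-Z)\le pn\}$; $L_{\mathcal{C}}(X)=|\mathcal{B}_R(X,pn)\cap\mathcal{C}|$; $A_{\mathcal{C}}(X)=2^{\frac{\varepsilon}{1+\varepsilon}nL_{\mathcal{C}}(X)}$; $S_{\mathcal{C}}=\mathbb{E}_{X\sim\mathbb{F}_2^{m\times n}}[A_{\mathcal{C}}(X)]$ ($X$ uniform); $T_{\mathcal{C}}=S_{\mathcal{C}}-1$. $\mathcal{C}+\{0,Y\}=\mathcal{C}\cup(\mathcal{C}+Y)$. *)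

(* Defs.v *)
From Stdlib Require Import Reals.
From mathcomp Require Import all_boot all_order all_algebra.
Set Implicit Arguments. Unset Strict Implicit. Unset Printing Implicit Defensive.

Definition Rleb (a b : R) : bool := if Rle_dec a b then true else false.
Definition Rltb (a b : R) : bool := if Rlt_dec a b then true else false.

Notation mat m n := ('M['F_2]_(m, n)).

Definition is_linear_code (m n : nat) (C : {set mat m n}) : Prop :=
  (0%R : mat m n) \in C /\
  (forall x y, x \in C -> y \in C -> (x + y)%R \in C) /\
  (forall (a : 'F_2) x, x \in C -> (a *: x)%R \in C).

Definition Lc (m n : nat) (p : R) (C : {set mat m n}) (X : mat m n) : nat :=
  #|[set Z in C | Rleb (INR (\rank (X - Z)%R)) (Rmult p (INR n))]|.

Definition Ac (m n : nat) (p eps : R) (C : {set mat m n}) (X : mat m n) : R :=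
  Rpower 2 (Rmult (Rmult (Rdiv eps (Rplus 1 eps)) (INR n)) (INR (Lc p C X))).

Definition Sc (m n : nat) (p eps : R) (C : {set mat m n}) : R :=
  Rdiv (\big[Rplus/R0]_(X : mat m n) Ac p eps C X) (INR #|{: mat m n}|).

Definition Tc (m n : nat) (p eps : R) (C : {set mat m n}) : R :=
  Rminus (Sc p eps C) 1.

Definition add0Y (m n : nat) (C : {set mat m n}) (Y : mat m n) : {set mat m n} :=
  C :|: [set (Z + Y)%R | Z in C].

Definition PrY (m n : nat) (P : pred (mat m n)) : R :=
  Rdiv (INR #|[set Y | P Y]|) (INR #|{: mat m n}|).

(* Main.v *)
Require Import Defs.
From Stdlib Require Import Reals.
From mathcomp Require Import all_boot all_order all_algebra.
From mathcomp Require Import Rstruct.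
Import Defs.
From mathcomp Require Import ring lra.
Import Order.TTheory GRing.Theory Num.Theory.
Local Open Scope ring_scope.

Lemma shift_sum (V : finZmodType) (F : V -> R) (y : V) :
  \sum_x F (x + y) = \sum_x F x.
Proof. by rewrite [RHS](reindex_inj (addIr y)). Qed.

Lemma abstract_markov (V : finZmodType) (f g : V -> R) (T : R) :
  (forall x, 1 <= f x) -> (exists x, 1 < f x) ->
  (forall y, g y <= (\sum_x f x * f (x + y)) / #|V|%:R) ->
  T = (\sum_x f x) / #|V|%:R - 1 ->
  #|[set y | 1 + 2 * T + T * Num.sqrt T < g y]|%:R / #|V|%:R < Num.sqrt T.
Proof.
move=> f1 [x0 fx0] hg hT.
set M : R := #|V|%:R.
have M0 : 0 < M by rewrite ltr0n; apply/card_gt0P; exists x0.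
set h := fun x => f x - 1.
have h0 x : 0 <= h x by rewrite /h subr_ge0.
have fh x : f x = h x + 1 by rewrite /h subrK.
have sumh : \sum_x h x = M * T.
  rewrite /h sumrB sumr_const hT -/M mulrBr mulrCA mulfV ?gt_eqF // mulr1.
  by rewrite mulr1.
have hx0 : 0 < h x0 by rewrite /h subr_gt0.
clearbody h.
have Tpos : 0 < T.
  have : 0 < \sum_x h x.
    rewrite (bigD1 x0) //=; apply: (lt_le_trans hx0); rewrite lerDl.
    by apply: sumr_ge0 => i _.
  by rewrite sumh pmulr_rgt0.
set W := fun y => \sum_x h x * h (x + y).
have W0 y : 0 <= W y by apply: sumr_ge0 => i _; apply: mulr_ge0.
have gW y : g y <= W y / M + 2 * T + 1.
  apply: (le_trans (hg y)); rewrite -/M.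
  have -> : \sum_x f x * f (x + y) = W y + 2 * (M * T) + M.
    rewrite /W -sumh.
    under eq_bigr => x _ do rewrite !fh mulrDl mulrDr mulr1 mul1r.
    rewrite !big_split /= (shift_sum _ h y) sumr_const.
    rewrite -/M.
    have e : forall a b m : R, a + b + (b + m) = a + 2 * b + m by move=> *; ring.
    exact: e.
  have -> : (W y + 2 * (M * T) + M) / M = W y / M + 2 * T + 1.
    have e : forall a b m : R, 0 < m -> (a + 2 * (m * b) + m) / m = a / m + 2 * b + 1.
      by move=> a b m hm; field; rewrite gt_eqF.
    exact: (e _ _ _ M0).
  by [].
have sumW : \sum_y W y = (M * T) ^+ 2.
  rewrite /W exchange_big /=.
  have hs x : \sum_y h (x + y) = M * T.
    by rewrite -sumh -(shift_sum _ h x); apply: eq_bigr => y _; rewrite addrC.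
  under eq_bigr => x _ do rewrite -mulr_sumr hs.
  by rewrite -mulr_suml sumh expr2.
set E := [set y | _].
set s := Num.sqrt T.
have s0 : 0 < s by rewrite sqrtr_gt0.
have Ts : T = s ^+ 2 by rewrite sqr_sqrtr // ltW.
case: (posnP #|E|) => [->|kpos].
  by rewrite mul0r.
have key : (#|E|%:R * (M * T * s)) < (M * T) ^+ 2.
  rewrite -sumW.
  apply: (@lt_le_trans _ _ (\sum_(y in E) W y)).
    rewrite mulr_natl -sumr_const.
    apply: ltr_sum.
      have [y0 y0E] : exists y, y \in E by apply/card_gt0P.
      by apply/hasP; exists y0; [exact: mem_index_enum | exact y0E].
    move=> y yE.
    have h1 := gW y.
    move: yE; rewrite inE => h2.
    have e : forall a b c d : R, 1 + 2 * a + b < c -> c <= d + 2 * a + 1 -> b < d.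
      by move=> a b c d H1 H2; lra.
    have h3 := e _ _ _ _ h2 h1.
    rewrite ltr_pdivlMr // in h3.
    by rewrite -mulrA mulrC.
  rewrite [X in _ <= X](bigID (fun y => y \in E)) /= lerDl.
  by apply: sumr_ge0 => i _.
have c0 : 0 < M * T * s by rewrite !mulr_gt0.
rewrite ltr_pdivrMr //.
rewrite -(ltr_pM2r c0).
have -> : s * M * (M * T * s) = (M * T) ^+ 2.
  have e : forall m t u : R, t = u ^+ 2 -> u * m * (m * t * u) = (m * t) ^+ 2.
    by move=> m t u ->; ring.
  exact: e.
exact: key.
Qed.

Lemma F2opp (x : 'F_2) : - x = x.
Proof. apply: oppr_pchar2; exact: pchar_Fp. Qed.

Lemma mopp (m n : nat) (A : mat m n) : - A = A.
Proof. by apply/matrixP => i j; rewrite mxE F2opp. Qed.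

Lemma DRltbE (a b : R) : Defs.Rltb a b = (a < b).
Proof. by rewrite /Defs.Rltb; case: Rlt_dec => h; apply/esym; [apply/RltP|apply/RltP]. Qed.

Lemma two_E : IZR 2 = 2%:R.
Proof. by rewrite IZRposE INRE. Qed.

Lemma Lc_add0Y (m n : nat) (p : R) (C : {set mat m n}) (X Y : mat m n) :
  (Lc p (add0Y C Y) X <= Lc p C X + Lc p C (X + Y))%N.
Proof.
rewrite /Lc.
set S1 := [set Z in C | _].
set S2 := [set Z in C | Defs.Rleb (INR (\rank (X + Y - Z))) (Rmult p (INR n))].
apply: (@leq_trans #|S1 :|: [set Z + Y | Z in S2]|).
  apply: subset_leq_card; apply/subsetP => Z; rewrite inE => /andP [ZC' PZ].
  case/setUP: ZC' => [ZC | /imsetP [Z0 Z0C EZ]].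
    by apply/setUP; left; rewrite inE ZC PZ.
  apply/setUP; right; apply/imsetP; exists Z0 => //; rewrite inE Z0C /=.
  have -> : X + Y - Z0 = X - Z by rewrite EZ !mopp addrA addrAC.
  exact: PZ.
apply: (leq_trans (leq_card_setU _ _).1).
by rewrite leq_add2l leq_imset_card.
Qed.

Lemma main_ring (m n : nat) (p eps : R) (C : {set mat m n}) :
  (0 < n)%N ->
  Rlt 0 p -> Rlt 0 eps ->
  is_linear_code C ->
  #|[set Y | 1 + 2 * Tc p eps C + Tc p eps C * Num.sqrt (Tc p eps C)
              < Sc p eps (add0Y C Y)]|%:R / #|{: mat m n}|%:R
   < Num.sqrt (Tc p eps C).
Proof.
move=> n0 p0 e0 [C0 _].
set c := Rmult (Rdiv eps (Rplus 1 eps)) (INR n).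
have c0 : Rlt 0 c.
  apply: Rmult_lt_0_compat; last by rewrite INRE; apply/RltP; rewrite ltr0n.
  apply: Rdiv_lt_0_compat => //. 
  apply: Rplus_lt_0_compat => //; exact: Rlt_0_1.
have two1 : Rle 1 2 by apply: Rlt_le; exact: Rlt_plus_1.
apply: (@abstract_markov _ (Ac p eps C) (fun Y => Sc p eps (add0Y C Y))).
- move=> x; apply/RleP; rewrite /Ac -/c.
  apply: (@Rle_trans _ (Rpower 2 0)); first by rewrite Rpower_O; [exact: Rle_refl | exact: Rlt_0_2].
  apply: Rle_Rpower => //; apply: Rmult_le_pos; [exact: Rlt_le | exact: pos_INR].
- exists 0; apply/RltP; rewrite /Ac -/c.
  apply: (@Rle_lt_trans _ (Rpower 2 0)); first by rewrite Rpower_O; [exact: Rle_refl | exact: Rlt_0_2].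
  apply: Rpower_lt; first exact: Rlt_plus_1.
  apply: Rmult_lt_0_compat => //; rewrite INRE; apply/RltP; rewrite ltr0n.
  apply/card_gt0P; exists 0; rewrite inE C0 /= subrr mxrank0.
  rewrite /Defs.Rleb; case: Rle_dec => // h; exfalso; apply: h.
  apply: Rmult_le_pos; [exact: Rlt_le | exact: pos_INR].
- move=> y; rewrite /Sc INRE.
  apply: ler_wpM2r; first by rewrite invr_ge0 ler0n.
  apply: ler_sum => x _; apply/RleP.
  rewrite /Ac -/c -RmultE -Rpower_plus.
  apply: Rle_Rpower => //.
  rewrite -Rmult_plus_distr_l; apply: Rmult_le_compat_l; first exact: Rlt_le.
  rewrite -plus_INR !INRE; apply/RleP; rewrite ler_nat; exact: Lc_add0Y.
- by rewrite /Tc /Sc INRE.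
Qed.

Local Close Scope ring_scope.

Theorem lemma7 (m n : nat) (p eps : R) (C : {set mat m n}) :
  (0 < n)%N ->
  Rlt 0 p -> Rlt p 1 -> Rlt 0 eps ->
  is_linear_code C ->
  Rlt (Tc p eps C) 1 ->
  Rlt (PrY (fun Y : mat m n =>
          Rltb (Rplus (Rplus 1 (Rmult 2 (Tc p eps C)))
                          (Rmult (Tc p eps C) (sqrt (Tc p eps C))))
                   (Sc p eps (add0Y C Y))))
      (sqrt (Tc p eps C)).
Proof.
move=> n0 p0 _ e0 lin _.
have := @main_ring m n p eps C n0 p0 e0 lin.
rewrite /PrY !INRE !RsqrtE => H.
apply/RltP.
under eq_finset => Y do rewrite DRltbE two_E.
exact: H.
Qed.
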